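(* Let $L>1$ and let $\mathcal{T}$ be an $L$-increasing tree of any depth $D$, i.e. $c(v)\ge L\,c(u)$ whenever $u$ is an ancestor of $v$. Then the online algorithm \textsc{Noadd} is $\frac{L}{L-1}$-competitive for MLAPD on $\mathcal{T}$.
   Context: Multi-level aggregation problem with deadlines (MLAPD): an instance is a rooted tree $\mathcal{T}$ with root $r$ and positive node costs $c(v)>0$, together with a set $\mathcal{R}$ of requests $\rho=(v,a,d)$, each issued at a node $v$, with arrival time $a$ and deadline $d\ge a$ (deadlines are assumed distinct). A service is a pair $(S,t)$ where $S$ is a subtree of $\mathcal{T}$ containing $r$ and $t$ is the transmission time; it costs $c(S)=\sum_{u\in S}c(u)$. A request $(v,a,d)$ is satisfied by $(S,t)$ if $v\in S$ and $a\le t\le d$. A schedule is a set of services; it is feasible if every request is satisfied; its cost is the sum of its services' costs. Online: requests are revealed at their arrival times. For a request $\rho$ issued at $v$, $P_\rho$ denotes the set of nodes on the path from $r$ to $v$. An algorithm is $c$-competitive if its cost is at most $c$ times the optimal cost on every instance. \textsc{Noadd}: whenever a request $\rho$ that has not yet been satisfied by a previous transmission reaches its deadline $d_\rho$, it transmits $(P_\rho,d_\rho)$ and nothing else. *)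

(* Defs.v *)
From mathcomp Require Import all_boot all_order all_algebra.
Set Implicit Arguments. Unset Strict Implicit. Unset Printing Implicit Defensive.
Import Order.TTheory GRing.Theory Num.Theory.
Local Open Scope ring_scope.

Section MLAPD.
Variables (R : realFieldType) (T : finType).

Definition is_rooted_tree (parent : T -> T) (r : T) : Prop :=
  parent r = r /\ forall v : T, exists k : nat, iter k parent v = r.

Definition is_ancestor (parent : T -> T) (u v : T) : Prop :=
  u <> v /\ exists k : nat, (0 < k)%N /\ iter k parent v = u.

Definition L_increasing (parent : T -> T) (c : T -> R) (L : R) : Prop :=
  forall u v : T, is_ancestor parent u v -> L * c u <= c v.

Definition is_rooted_subtree (parent : T -> T) (r : T) (S : {set T}) : Prop :=
  r \in S /\ forall u : T, u \in S -> parent u \in S.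

Definition path_set (parent : T -> T) (v : T) : {set T} :=
  [set u | [exists k : 'I_#|T|.+1, iter k parent v == u]].

Definition request := (T * R * R)%type.
Definition req_node (q : request) : T := q.1.1.
Definition req_arr (q : request) : R := q.1.2.
Definition req_dl (q : request) : R := q.2.

(* a service (S, t) : transmitted subtree and transmission time *)
Definition service := ({set T} * R)%type.

Definition satisfies (s : service) (q : request) : bool :=
  (req_node q \in s.1) && (req_arr q <= s.2 <= req_dl q).

Definition service_cost (c : T -> R) (s : service) : R := \sum_(u in s.1) c u.

Definition sched_cost (c : T -> R) (sch : seq service) : R :=
  \sum_(s <- sch) service_cost c s.

Definition feasible (parent : T -> T) (r : T) (reqs : seq request)
    (sch : seq service) : Prop :=
  (forall s, s \in sch -> is_rooted_subtree parent r s.1) /\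
  (forall q, q \in reqs -> has (fun s => satisfies s q) sch).

Definition noadd_step (parent : T -> T) (sch : seq service) (q : request)
  : seq service :=
  if has (fun s => satisfies s q) sch then sch
  else rcons sch (path_set parent (req_node q), req_dl q).

Definition noadd (parent : T -> T) (reqs : seq request) : seq service :=
  foldl (noadd_step parent) [::]
        (sort (fun x y : request => req_dl x <= req_dl y) reqs).

Definition valid_requests (reqs : seq request) : Prop :=
  (forall q, q \in reqs -> req_arr q <= req_dl q) /\ uniq (map req_dl reqs).

End MLAPD.

(* Main.v *)
Require Import Defs.
From mathcomp Require Import all_boot all_order all_algebra.
From mathcomp Require Import ring lra.
Import Order.TTheory GRing.Theory Num.Theory.
Set Implicit Arguments. Unset Strict Implicit.
Local Open Scope ring_scope.

Section Aux.
Variables (R : realFieldType) (T : finType).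
Implicit Types (c : T -> R).

Lemma sum_subset_le {c : T -> R} {A B : {set T}} : (forall v, 0 <= c v) -> A \subset B ->
  \sum_(u in A) c u <= \sum_(u in B) c u.
Proof.
move=> c0 AB; rewrite [X in _ <= X](big_setID A) /= (setIidPr AB) lerDl.
by apply: sumr_ge0.
Qed.

Lemma sum_setU1_le {c : T -> R} {v : T} {B : {set T}} : (forall v, 0 <= c v) ->
  \sum_(u in v |: B) c u <= c v + \sum_(u in B) c u.
Proof.
move=> c0; case: (boolP (v \in B)) => vB.
  have -> : v |: B = B by apply/setUidPr; rewrite sub1set.
  by rewrite lerDr.
by rewrite big_setU1.
Qed.

Lemma path_set_self (parent : T -> T) v : v \in path_set parent v.
Proof. by rewrite inE; apply/existsP; exists ord0. Qed.

Lemma path_set_sub (parent : T -> T) v :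
  path_set parent v \subset v |: path_set parent (parent v).
Proof.
apply/subsetP => u; rewrite inE => /existsP [[k hk]] /= /eqP <-.
case: k hk => [|k] hk; first by rewrite setU11.
rewrite iterSr; apply/setU1P; right; rewrite inE; apply/existsP.
by exists (Ordinal (ltnW hk)).
Qed.

Lemma iter_fixp (f : T -> T) r k : f r = r -> iter k f r = r.
Proof. by move=> fr; elim: k => //= k ->. Qed.

Lemma path_set_root (parent : T -> T) r : parent r = r ->
  path_set parent r \subset [set r].
Proof.
move=> pr; apply/subsetP => u; rewrite !inE => /existsP [k] /eqP <-.
by rewrite iter_fixp // eqxx.
Qed.

Lemma path_cost parent r c L : is_rooted_tree parent r ->
  (forall v, 0 < c v) -> 1 < L -> L_increasing parent c L ->
  forall v, \sum_(u in path_set parent v) c u <= L / (L - 1) * c v.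
Proof.
move=> [pr hr] c0 L1 Linc v.
have c0' : forall v, 0 <= c v by move=> w; apply: ltW.
have L10 : 0 < L - 1 by rewrite subr_gt0.
have K1 : 1 <= L / (L - 1).
  by rewrite ler_pdivlMr // mul1r lerBlDr lerDl.
have [k hk] := hr v; elim: k v hk => [|k IH] v hk.
  rewrite /= in hk; rewrite hk.
  apply: (le_trans (sum_subset_le c0' (@path_set_root parent r pr))).
  by rewrite big_set1 ler_peMl // ltW.
case: (eqVneq v r) => [->|vr].
  apply: (le_trans (sum_subset_le c0' (@path_set_root parent r pr))).
  by rewrite big_set1 ler_peMl // ltW.
have pv : parent v <> v.
  by move=> e; move: hk; rewrite iter_fixp // => /eqP; rewrite (negbTE vr).
have anc : L * c (parent v) <= c v.
  apply: Linc; split => //; exists 1%N; split => //.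
rewrite iterSr in hk.
apply: (le_trans (sum_subset_le c0' (path_set_sub parent v))).
apply: (le_trans (sum_setU1_le c0')).
apply: (le_trans (lerD (lexx _) (IH _ hk))).
have : c (parent v) <= c v / L.
  by rewrite ler_pdivlMr ?(lt_trans ltr01 L1) // mulrC.
move=> h.
have L0 : 0 < L by apply: lt_trans ltr01 L1.
apply: (le_trans (lerD (lexx _) (ler_wpM2l _ h))).
  by apply: ltW; rewrite divr_gt0.
have -> : c v + L / (L - 1) * (c v / L) = L / (L - 1) * c v.
  by field; rewrite !gt_eqF.
done.
Qed.

Definition svc (parent : T -> T) (q : request R T) : service R T :=
  (path_set parent (req_node q), req_dl q).

Definition tstep (parent : T -> T) (X : seq (request R T)) (q : request R T) :=
  if has (fun s => satisfies s q) (map (svc parent) X) then X else rcons X q.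

Lemma noadd_fold parent Y X :
  foldl (noadd_step parent) (map (svc parent) X) Y =
  map (svc parent) (foldl (tstep parent) X Y).
Proof.
elim: Y X => //= y Y IH X; rewrite -IH; congr foldl.
by rewrite /noadd_step /tstep; case: ifP => // _; rewrite map_rcons.
Qed.

Definition rel_ok (parent : T -> T) (q1 q2 : request R T) : bool :=
  (req_node q2 \in path_set parent (req_node q1)) ==> (req_dl q1 < req_arr q2).

Lemma fold_all parent (p : pred (request R T)) Y X :
  all p X -> all p Y -> all p (foldl (tstep parent) X Y).
Proof.
elim: Y X => //= y Y IH X pX /andP [py pY]; apply: IH => //.
by rewrite /tstep; case: ifP => // _; rewrite all_rcons py.
Qed.

Lemma fold_inv parent Y X :
  pairwise (rel_ok parent) X ->
  all (fun x => all (fun y => req_dl x <= req_dl y) Y) X ->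
  sorted (fun x y : request R T => req_dl x <= req_dl y) Y ->
  pairwise (rel_ok parent) (foldl (tstep parent) X Y).
Proof.
elim: Y X => //= y Y IH X pX dX sY.
have sY' : sorted (fun x y : request R T => req_dl x <= req_dl y) Y.
  by apply: path_sorted sY.
have yY : all (fun y' : request R T => req_dl y <= req_dl y') Y.
  apply: (order_path_min _ sY) => a b d; apply: le_trans.
apply: IH => //.
- rewrite /tstep; case: ifP => // /negbT /hasPn nh.
  rewrite pairwise_rcons pX andbT; apply/allP => x xX.
  have /andP [xy _] := allP dX x xX.
  have := nh (svc parent x) (map_f _ xX).
  rewrite /satisfies /= /rel_ok => ns; apply/implyP => hin.
  rewrite ltNge; apply/negP => h; move: ns; by rewrite hin h xy.
- rewrite /tstep; case: ifP => _.
    by apply/allP => x /(allP dX) /andP [].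
  rewrite all_rcons yY /=; apply/allP => x /(allP dX) /andP [].
  done.
Qed.

Variable sch : seq (service R T).
Definition pick_s (q : request R T) : service R T :=
  nth (set0, 0) sch (find (fun s => satisfies s q) sch).

Lemma uniq_pick parent u X :
  pairwise (rel_ok parent) X ->
  all (fun q => has (fun s => satisfies s q) sch) X ->
  uniq (map pick_s (filter (fun q => req_node q == u) X)).
Proof.
elim: X => //= x X IH /andP [rx pX] /andP [hx hX].
case: ifP => [/eqP xu|_]; last exact: IH.
rewrite map_cons /= IH // andbT; apply/mapP => [[y]].
rewrite mem_filter => /andP [/eqP yu yX] e.
have := allP rx y yX; rewrite /rel_ok yu -xu path_set_self /= => lt.
have sx := nth_find (set0, 0) hx.
have sy := nth_find (set0, 0) (allP hX y yX).
move: sx sy; rewrite -/(pick_s x) -/(pick_s y) -e /satisfies.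
case/andP => _ /andP [_ h1] /andP [_ /andP [h2 _]].
by have := lt_le_trans (le_lt_trans h1 lt) h2; rewrite ltxx.
Qed.

Lemma count_le parent u X :
  pairwise (rel_ok parent) X ->
  all (fun q => has (fun s => satisfies s q) sch) X ->
  (count (fun q => req_node q == u) X <= count (fun s : service R T => u \in s.1) sch)%N.
Proof.
move=> pX hX; rewrite -size_filter -(size_map pick_s) -size_filter.
apply: uniq_leq_size; first exact: uniq_pick pX hX.
move=> s /mapP [q]; rewrite mem_filter => /andP [/eqP qu qX] ->.
have hq := allP hX q qX.
rewrite mem_filter; apply/andP; split.
  have := nth_find (set0, 0) hq; rewrite -/(pick_s q) /satisfies qu.
  by case/andP.
by apply: mem_nth; rewrite -has_find.
Qed.

Lemma sum_by_node (A : Type) (X : seq A) (g : A -> T) (F : T -> R) :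
  \sum_(q <- X) F (g q) = \sum_u F u *+ count (fun q => g q == u) X.
Proof.
elim: X => [|x X IH]; first by rewrite big_nil big1 // => u _; rewrite mulr0n.
rewrite big_cons IH /=.
under [X in _ = X]eq_bigr do rewrite mulrnDr.
rewrite big_split /=; congr (_ + _).
rewrite (bigD1 (g x)) //= eqxx mulr1n big1 ?addr0 // => u /negbTE.
by rewrite eq_sym => ->; rewrite mulr0n.
Qed.

Lemma sched_by_node (c : T -> R) :
  sched_cost c sch = \sum_u c u *+ count (fun s : service R T => u \in s.1) sch.
Proof.
rewrite /sched_cost; elim: sch => [|s S IH]; first by rewrite big_nil big1 // => u _; rewrite mulr0n.
rewrite big_cons IH /=.
under [X in _ = X]eq_bigr do rewrite mulrnDr.
rewrite big_split /=; congr (_ + _).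
rewrite /service_cost big_mkcond /=; apply: eq_bigr => u _.
by rewrite mulrb.
Qed.
End Aux.

Theorem mainTheorem2 (R : realFieldType) (T : finType) (parent : T -> T) (r : T)
    (c : T -> R) (L : R) :
  is_rooted_tree parent r ->
  (forall v, 0 < c v) ->
  1 < L ->
  L_increasing parent c L ->
  forall reqs : seq (request R T), valid_requests reqs ->
  forall sch : seq (service R T), feasible parent r reqs sch ->
  sched_cost c (noadd parent reqs) <= L / (L - 1) * sched_cost c sch.
Proof.
move=> tree cpos L1 Linc reqs _ sch [_ fQ].
have K0 : 0 <= L / (L - 1).
  by apply: ltW; rewrite divr_gt0 ?subr_gt0 // (lt_trans ltr01 L1).
pose Y := sort (fun x y : request R T => req_dl x <= req_dl y) reqs.
pose X := foldl (tstep parent) [::] Y.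
have eN : noadd parent reqs = map (svc parent) X.
  by have := noadd_fold parent Y [::]; rewrite /= => <-.
have pX : pairwise (rel_ok parent) X.
  apply: fold_inv => //; apply: sort_sorted => a b; apply: le_total.
have hX : all (fun q => has (fun s => satisfies s q) sch) X.
  apply: fold_all => //; apply/allP => q; rewrite mem_sort => /fQ //.
rewrite eN /sched_cost big_map.
apply: (@le_trans _ _ (\sum_(q <- X) L / (L - 1) * c (req_node q))).
  apply: ler_sum => q _; rewrite /service_cost /=; exact: (path_cost tree cpos L1 Linc).
rewrite -mulr_sumr; apply: ler_wpM2l => //.
rewrite (sum_by_node X (@req_node R T) c) -/(sched_cost c sch) sched_by_node.
apply: ler_sum => u _; apply: ler_wpMn2l; first exact: ltW.
exact: (@count_le R T sch parent u X pX hX).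
Qed.
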